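(* Every sub-correlation matrix $\xi$ satisfies $\mathrm{Tr}[\xi\tau]\le1$ for all $\tau\in\mathsf P(S)$. Conversely, if $W\ge0$ satisfies $\mathrm{Tr}[W\tau]\le1$ for all $\tau\in\mathsf P(S)$, then $W/d$ is a sub-correlation matrix.
   Context: $S$ is a $d$-dimensional quantum system with non-degenerate Hamiltonian $H=\sum_i E_i|i\rangle\langle i|$, $E_1<\dots<E_d$; matrices are written in this eigenbasis. $\mathsf P(S)$ is the set of passive states, i.e. density matrices $\sum_i p_i|i\rangle\langle i|$ with $p_1\ge\dots\ge p_d$. A sub-correlation matrix is a positive semidefinite $d\times d$ matrix $\xi$ with $\xi_{ii}\le1$ for all $i$. *)

(* Defs.v *)
From HB Require Import structures.
From mathcomp Require Import all_boot all_order all_algebra.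
Set Implicit Arguments. Unset Strict Implicit. Unset Printing Implicit Defensive.
Import Order.TTheory GRing.Theory Num.Theory.
Local Open Scope ring_scope.

(* Matrices are written in the energy eigenbasis |1>,...,|d> of H,
   indexed by 'I_d (index 0 = ground state, i.e. E_1). *)

Definition psdmx (C : numClosedFieldType) (n : nat) (A : 'M[C]_n) : Prop :=
  A^T = map_mx Num.conj A /\
  forall v : 'rV[C]_n, 0 <= (v *m A *m (map_mx Num.conj v)^T) 0 0.

Definition density_mx (C : numClosedFieldType) (n : nat) (rho : 'M[C]_n) : Prop :=
  psdmx rho /\ \tr rho = 1.

Definition passive (C : numClosedFieldType) (n : nat) (tau : 'M[C]_n) : Prop :=
  density_mx tau /\
  exists p : 'rV[C]_n, tau = diag_mx p /\
    (forall i j : 'I_n, (i <= j)%N -> p 0 j <= p 0 i).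

Definition subcorr (C : numClosedFieldType) (n : nat) (xi : 'M[C]_n) : Prop :=
  psdmx xi /\ forall i : 'I_n, xi i i <= 1.

(* Main.v *)
Require Import Defs.
From mathcomp Require Import all_boot all_order all_algebra.
Import Order.TTheory GRing.Theory Num.Theory.
Local Open Scope ring_scope.

Lemma psd_diag_ge0 (C : numClosedFieldType) (n : nat) (A : 'M[C]_n) (i : 'I_n) :
  psdmx A -> 0 <= A i i.
Proof.
case=> _ H; have := H (delta_mx 0 i).
have -> : map_mx Num.conj (delta_mx 0 i : 'rV[C]_n) = delta_mx 0 i.
  by apply/matrixP => a b; rewrite !mxE conjC_nat.
by rewrite trmx_delta -rowE -colE !mxE.
Qed.

Arguments psd_diag_ge0 {C n A} i.

Lemma conj_invn (C : numClosedFieldType) (d : nat) :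
  Num.conj ((d%:R : C)^-1) = (d%:R)^-1.
Proof. by rewrite fmorphV rmorph_nat. Qed.

Theorem mainTheorem13 (C : numClosedFieldType) (d : nat) (hd : (0 < d)%N) :
  (forall xi : 'M[C]_d, subcorr xi ->
     forall tau : 'M[C]_d, passive tau -> \tr (xi *m tau) <= 1)
  /\
  (forall W : 'M[C]_d, psdmx W ->
     (forall tau : 'M[C]_d, passive tau -> \tr (W *m tau) <= 1) ->
     subcorr ((d%:R)^-1 *: W)).
Proof.
have cge0 : 0 <= ((d%:R : C)^-1) by rewrite invr_ge0 ler0n.
split.
  move=> xi [_ Hxi] tau [[Ptau Ttau] [p [tauE _]]]; subst tau.
  have p0 : forall i, 0 <= p 0 i.
    by move=> i; have := psd_diag_ge0 i Ptau; rewrite mxE eqxx mulr1n.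
  have -> : \tr (xi *m diag_mx p) = \sum_i xi i i * p 0 i.
    by rewrite /mxtrace; apply: eq_bigr => i _; rewrite mul_mx_diag mxE.
  rewrite -Ttau /mxtrace; apply: ler_sum => i _.
  rewrite mxE eqxx mulr1n -[leRHS]mul1r.
  exact: ler_wpM2r.
move=> W [HT HQ] Htr.
set c := ((d%:R : C)^-1).
have Pc : passive (c%:M : 'M[C]_d).
  split; last by exists (const_mx c); split; [rewrite diag_const_mx|move=> *; rewrite !mxE].
  split; last first.
    rewrite mxtrace_scalar -mulr_natr mulVf //.
    by rewrite pnatr_eq0 -lt0n.
  split.
    by rewrite tr_scalar_mx map_scalar_mx /= /c fmorphV rmorph_nat.
  move=> v; rewrite mul_mx_scalar -scalemxAl mxE.
  apply: mulr_ge0 => //.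
  rewrite !mxE; apply: sumr_ge0 => k _; rewrite !mxE.
  exact: mul_conjC_ge0.
have HtrW := Htr _ Pc.
rewrite mul_mx_scalar mxtraceZ in HtrW.
split.
  split.
    by rewrite [LHS]linearZ /= HT map_mxZ /= /c fmorphV rmorph_nat.
  move=> v; rewrite -scalemxAr -scalemxAl mxE.
  exact: mulr_ge0.
move=> i; rewrite mxE.
apply: le_trans HtrW; apply: ler_wpM2l => //.
rewrite /mxtrace (bigD1 i) //= lerDl.
by apply: sumr_ge0 => k _; apply: psd_diag_ge0.
Qed.
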